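(* Let $n\ge 1$ be odd and let $\mathbb{P}^n=\mathrm{Proj}\,\mathbb{F}_q[x_0,\dots,x_n]$. Set $$g=\sum_{\substack{0\le i\le n-1\\ i \text{ even}}}\left(x_i^qx_{i+1}-x_ix_{i+1}^q\right).$$ Then $V(g)\subset\mathbb{P}^n$ is a smooth hypersurface of degree $q+1$ with $V(g)(\mathbb{F}_q)=\mathbb{P}^n(\mathbb{F}_q)$; moreover, if $n\ge 3$, $V(g)$ is geometrically irreducible.
   Context: $\mathbb{F}_q$ is the finite field of order $q=p^r$. For a projective $\mathbb{F}_q$-scheme $X$, $X(\mathbb{F}_q)$ denotes its set of $\mathbb{F}_q$-rational points. *)

(* Defs.v *)
From HB Require Import structures.
From mathcomp Require Import all_boot all_order all_algebra.
From mathcomp Require Import mpoly.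
Set Implicit Arguments. Unset Strict Implicit. Unset Printing Implicit Defensive.
Import Order.TTheory GRing.Theory.
Local Open Scope ring_scope.

Definition gpoly (R : ringType) (n q : nat) : {mpoly R[n.+1]} :=
  \sum_(i < n | ~~ odd i)
     ('X_(inord i) ^+ q * 'X_(inord i.+1) - 'X_(inord i) * 'X_(inord i.+1) ^+ q).

(* A projective point with coordinates in K: a nonzero vector (x_0,...,x_n). *)
Definition nonzero_vec (K : ringType) (m : nat) (x : 'I_m -> K) : Prop :=
  exists i, x i != 0.

Definition mirreducible (K : ringType) (m : nat) (h : {mpoly K[m]}) : Prop :=
  (1 < msize h)%N /\
  forall a b : {mpoly K[m]}, h = a * b -> (msize a <= 1)%N \/ (msize b <= 1)%N.

(* V(G) is irreducible (as a topological space, over K algebraically closed):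
   G is a nonzero scalar multiple of a power of an irreducible polynomial,
   i.e. the radical of (G) is a prime ideal. *)
Definition irreducible_hypersurface (K : ringType) (m : nat) (G : {mpoly K[m]}) : Prop :=
  exists (c : K) (h : {mpoly K[m]}) (k : nat),
    c != 0 /\ mirreducible h /\ (0 < k)%N /\ G = c *: h ^+ k.

(* V(G) in P^n_K is smooth (Jacobian criterion): no nonzero point of K^{n+1}
   where G and all partial derivatives of G vanish. *)
Definition smooth_hypersurface (K : ringType) (m : nat) (G : {mpoly K[m]}) : Prop :=
  forall x : 'I_m -> K, nonzero_vec x ->
    ~ (G.@[x] = 0 /\ forall i : 'I_m, (mderiv i G).@[x] = 0).

(* Main.v *)
Require Import Defs.
From HB Require Import structures.
From mathcomp Require Import all_boot all_order all_algebra all_fingroup all_solvable all_field.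
From mathcomp Require Import mpoly.
From mathcomp Require Import zify.
Import GRing.Theory.
Local Open Scope ring_scope.
Set Implicit Arguments. Unset Strict Implicit. Unset Printing Implicit Defensive.

Lemma gpoly_map (F L : comRingType) (f : {rmorphism F -> L}) n q :
  map_mpoly f (gpoly F n q) = gpoly L n q.
Proof.
rewrite /gpoly rmorph_sum; apply: eq_bigr => i _.
by rewrite rmorphB !rmorphM !rmorphXn /= !map_mpolyX.
Qed.

Lemma gpoly_eval (R : comRingType) n q (x : 'I_n.+1 -> R) :
  (gpoly R n q).@[x] = \sum_(i < n | ~~ odd i)
     (x (inord i) ^+ q * x (inord i.+1) - x (inord i) * x (inord i.+1) ^+ q).
Proof.
rewrite /gpoly raddf_sum; apply: eq_bigr => i _ /=.
by rewrite raddfB /= !mevalM !rmorphXn /= !mevalXU.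
Qed.

Lemma card_char (F : finFieldType) : (#|F|%:R : F) = 0.
Proof. by rewrite -cardsT -FinRing.zmodXgE expg_cardG ?inE. Qed.

Lemma gpoly_Fpts (F : finFieldType) n (x : 'I_n.+1 -> F) :
  (gpoly F n #|F|).@[x] = 0.
Proof.
rewrite gpoly_eval big1 // => i _.
by rewrite !expf_card subrr.
Qed.

Lemma X_homog (R : comRingType) n (i : 'I_n) : ('X_i : {mpoly R[n]}) \is 1.-homog.
Proof. by rewrite dhomogX /= mdeg1. Qed.

Lemma gpoly_homog (R : comRingType) n q : gpoly R n q \is q.+1.-homog.
Proof.
rewrite /gpoly; apply: rpred_sum => i _; apply: rpredB.
  have := dhomogM (dhomogMn q (X_homog R (inord i))) (X_homog R (inord i.+1)).
  rewrite mul1n addn1; exact.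
have := dhomogM (X_homog R (inord i)) (dhomogMn q (X_homog R (inord i.+1))).
rewrite mul1n add1n; exact.
Qed.

Lemma muniXw (R : comRingType) n (j : 'I_n) :
  muni ('X_(widen_ord (leqnSn n) j) : {mpoly R[n.+1]}) = ('X_j)%:P.
Proof.
rewrite muniE msuppX big_seq1 mcoeffX eqxx scale1r.
have -> : [multinom (U_(widen_ord (leqnSn n) j)%MM : 'X_{1..n.+1}) (widen_ord (leqnSn n) i) | i < n] = U_(j)%MM.
  by apply/mnmP => i; rewrite mnmE !mnm1E.
rewrite mnm1E.
have -> : (widen_ord (leqnSn n) j == ord_max) = false.
  by apply/negbTE; rewrite -val_eqE /= neq_ltn ltn_ord.
by rewrite expr0 alg_polyC.
Qed.

Lemma muniXmax (R : comRingType) n :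
  muni ('X_(ord_max) : {mpoly R[n.+1]}) = 'X.
Proof.
rewrite muniE msuppX big_seq1 mcoeffX eqxx scale1r.
have -> : [multinom (U_(@ord_max n)%MM : 'X_{1..n.+1}) (widen_ord (leqnSn n) i) | i < n] = 0%MM.
  apply/mnmP => i; rewrite mnmE !mnm1E mnm0E.
  by rewrite -val_eqE /= eqn_leq leqNgt ltn_ord.
by rewrite mnm1E eqxx expr1 mpolyX0 scale1r.
Qed.

Lemma inord_widen n i : (i <= n)%N ->
  (inord i : 'I_n.+2) = widen_ord (leqnSn n.+1) (inord i : 'I_n.+1).
Proof. by move=> hi; apply: val_inj; rewrite /= !inordK // ltnS ?(leqW hi). Qed.

Lemma muni_gpoly (R : comRingType) n q : ~~ odd n ->
  muni (gpoly R n.+1 q) = (gpoly R n q)%:P +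
    (('X_(ord_max) ^+ q)%:P * 'X - ('X_(ord_max))%:P * 'X ^+ q).
Proof.
move=> evn; rewrite /gpoly big_mkcond big_ord_recr /= -big_mkcond /= evn.
rewrite rmorphD rmorph_sum rmorph_sum /=; congr (_ + _).
  apply: eq_bigr => i _.
  rewrite !(inord_widen (ltnW (ltn_ord i))) (inord_widen (ltn_ord i)).
  rewrite rmorphB !rmorphM !rmorphXn /= !muniXw.
  by rewrite polyCB !polyCM !rmorphXn.
have -> : (inord n : 'I_n.+2) = widen_ord (leqnSn n.+1) ord_max.
  by apply: val_inj; rewrite /= inordK.
have -> : (inord n.+1 : 'I_n.+2) = ord_max by apply: val_inj; rewrite /= inordK.
by rewrite rmorphB !rmorphM !rmorphXn /= muniXw muniXmax.
Qed.

Lemma muni_gpoly_coef1 (R : comRingType) n q : ~~ odd n -> q != 1%N ->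
  (muni (gpoly R n.+1 q))`_1 = 'X_(ord_max) ^+ q.
Proof.
move=> evn q1; rewrite muni_gpoly // coefD coefC /= add0r coefB !coefCM coefX coefXn.
by rewrite eqxx mulr1 eq_sym (negbTE q1) mulr0 subr0.
Qed.

Lemma mpolyX_neq0 (R : idomainType) n (i : 'I_n) : ('X_i : {mpoly R[n]}) != 0.
Proof.
by apply/eqP => /(congr1 (mcoeff U_(i)%MM)); rewrite mcoeffX eqxx mcoeff0 => /eqP; rewrite oner_eq0.
Qed.

Lemma gpoly_neq0 (R : idomainType) n q : ~~ odd n -> q != 1%N ->
  gpoly R n.+1 q != 0.
Proof.
move=> evn q1; apply/eqP => g0.
have := muni_gpoly_coef1 R evn q1; rewrite g0 rmorph0 coef0 => /esym/eqP.
by rewrite expf_eq0 (negbTE (mpolyX_neq0 _ _)) andbF.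
Qed.

Lemma mderiv_Xpow (R : comRingType) n q (a j : 'I_n) : (q%:R : R) = 0 ->
  mderiv j ('X_a ^+ q : {mpoly R[n]}) = 0.
Proof.
by move=> q0; rewrite mpolyXn mderivX mulmnE natrM q0 mulr0 scale0r.
Qed.

Lemma mderiv_X1 (R : comRingType) n (a j : 'I_n) :
  mderiv j ('X_a : {mpoly R[n]}) = (a == j)%:R.
Proof.
rewrite mderivX mnm1E; case: eqP => [->|_]; last by rewrite scale0r.
have -> : (U_(j) - U_(j))%MM = 0%MM by apply/mnmP => k; rewrite mnmBE subnn mnm0E.
by rewrite mpolyX0 scale1r.
Qed.

Lemma inord_eq n a b : (a <= n)%N -> (b <= n)%N ->
  ((inord a : 'I_n.+1) == inord b) = (a == b).
Proof. by move=> ha hb; rewrite -val_eqE /= !inordK. Qed.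

Lemma dg_eval (R : comRingType) n q (x : 'I_n.+1 -> R) (j : nat) :
  (q%:R : R) = 0 -> (j <= n)%N ->
  (mderiv (inord j) (gpoly R n q)).@[x] = \sum_(i < n | ~~ odd i)
    (x (inord i) ^+ q * ((val i).+1 == j)%:R - (val i == j)%:R * x (inord i.+1) ^+ q).
Proof.
move=> q0 jn; rewrite /gpoly (big_morph _ (mderivD _) (mderiv0 _ _)) raddf_sum; apply: eq_bigr => i _ /=.
rewrite mderivB !mderivM !mderiv_Xpow // !mderiv_X1 mul0r mulr0 add0r addr0.
rewrite !inord_eq // ?(ltnW (ltn_ord i)) //.
rewrite raddfB /= !mevalM.
by rewrite !rmorphXn /= !mevalXU !rmorph_nat.
Qed.

Lemma sum_collapse (R : zmodType) n (F : 'I_n -> R) (i0 : 'I_n) : ~~ odd i0 ->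
  (forall i : 'I_n, ~~ odd i -> i != i0 -> F i = 0) ->
  \sum_(i < n | ~~ odd i) F i = F i0.
Proof.
move=> e0 h; rewrite (bigD1 i0) //= big1 ?addr0 // => i /andP[oi ne]; exact: h.
Qed.

Lemma gpoly_smooth (L : idomainType) n q : odd n -> (q%:R : L) = 0 ->
  smooth_hypersurface (gpoly L n q).
Proof.
move=> on q0 x [k xk] [_ hd].
have xkq : x k ^+ q != 0 by rewrite expf_neq0.
case ok: (odd k).
  have [k' ek] : exists k', nat_of_ord k = k'.+1.
    by move: ok; case: (nat_of_ord k) => [|k0] // _; exists k0.
  have k'n : (k' < n)%N by have := ltn_ord k; rewrite ek ltnS.
  have ek' : ~~ odd k' by have := ok; rewrite ek /= => ->.
  have := hd (inord k'); rewrite dg_eval ?(ltnW k'n) //.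
  rewrite (@sum_collapse _ _ _ (Ordinal k'n)) //=.
    rewrite eqxx (gtn_eqF (ltnSn k')) mul1r mulr0 sub0r.
    have -> : (inord k'.+1 : 'I_n.+1) = k by apply: val_inj; rewrite /= inordK -ek.
    by move/eqP; rewrite oppr_eq0 (negbTE xkq).
  move=> i oi ne; rewrite -(inj_eq val_inj) /= in ne.
  rewrite (negbTE ne) mul0r subr0.
  have -> : ((val i).+1 == k') = false.
    by apply/negbTE; apply: contraNneq ek' => <-; rewrite /= oi.
  by rewrite mulr0.
have kn : (val k < n)%N.
  have := ltn_ord k; rewrite ltnS leq_eqVlt => /orP[/eqP ekn|//].
  by move: ok; rewrite ekn on.
have := hd (inord k.+1); rewrite dg_eval //.
rewrite (@sum_collapse _ _ _ (Ordinal kn)) //=.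
  rewrite eqxx (ltn_eqF (ltnSn k)) mul0r mulr1 subr0.
  by rewrite inord_val => /eqP; rewrite (negbTE xkq).
  by rewrite ok.
move=> i oi ne; rewrite -(inj_eq val_inj) /= in ne.
rewrite eqSS (negbTE ne) mulr0 sub0r.
have -> : (val i == k.+1) = false.
  by apply/negbTE; apply: contraNneq oi => ->; rewrite /= ok.
by rewrite mul0r oppr0.
Qed.

Lemma mpoly_morph_id (R : comRingType) n (psi : {mpoly R[n]} -> {mpoly R[n]}) :
  {morph psi : x y / x + y} -> psi 0 = 0 -> {morph psi : x y / x * y} -> psi 1 = 1 ->
  (forall c, psi c%:MP = c%:MP) -> (forall i, psi 'X_i = 'X_i) ->
  forall p, psi p = p.
Proof.
move=> pD p0 pM p1 pC pX p.
rewrite [in LHS](mpolyE p) (big_morph _ pD p0) [in RHS](mpolyE p).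
apply: eq_bigr => m _; rewrite -mul_mpolyC pM pC mpolyXE_id.
congr (_ * _); rewrite (big_morph _ pM p1); apply: eq_bigr => i _.
elim: (m i) => [|k ih]; first by rewrite !expr0 p1.
by rewrite !exprS pM ih pX.
Qed.

Definition rho (R : comRingType) n (P : {poly {mpoly R[n]}}) : {mpoly R[n.+1]} :=
  (map_poly (@mwiden n R) P).['X_(ord_max)].

Lemma rho_muni (R : comRingType) n (p : {mpoly R[n.+1]}) : rho (muni p) = p.
Proof.
apply: (@mpoly_morph_id R n.+1 (fun p => rho (muni p))) => //.
- by move=> x y; rewrite /rho rmorphD rmorphD hornerD.
- by rewrite /rho rmorph0 rmorph0 horner0.
- by move=> x y; rewrite /rho rmorphM rmorphM hornerM.
- by rewrite /rho rmorph1 rmorph1 hornerC.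
- move=> c; rewrite /rho muniC map_polyC hornerC /=; apply: mwidenC.
move=> i; have [j ->|->] := unliftP ord_max i.
  have -> : lift ord_max j = widen_ord (leqnSn n) j.
    by apply: val_inj; rewrite /= /bump leqNgt ltn_ord.
  rewrite muniXw /rho map_polyC hornerC /=.
  by rewrite (@mwidenX n R) (@mnmwiden1 n).
by rewrite muniXmax /rho map_polyX hornerX.
Qed.

Lemma eis (A B : idomainType) (phi : {rmorphism A -> B}) (a b : {poly A}) :
  phi ((a * b)`_0) != 0 ->
  (forall i, (0 < i)%N -> phi ((a * b)`_i) = 0) ->
  phi (lead_coef b) != 0 ->
  (size b <= 1)%N.
Proof.
move=> h0 hi hb.
have a0 : phi a`_0 != 0.
  by apply: contraNneq h0; rewrite coef0M rmorphM => ->; rewrite mul0r.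
have exP : exists i, phi a`_i != 0 by exists 0%N.
have bndP : forall i, phi a`_i != 0 -> (i <= size a)%N.
  move=> i; apply: contraNT; rewrite -ltnNge => /ltnW hi'.
  by rewrite nth_default // rmorph0.
case: (ex_maxnP exP bndP) => r ar rmax.
set t := (size b).-1.
have key : phi ((a * b)`_(r + t)) = phi a`_r * phi (lead_coef b).
  have rlt : (r < (r + t).+1)%N by rewrite ltnS leq_addr.
  rewrite coefM rmorph_sum /= (bigD1 (Ordinal rlt)) //= big1 ?addr0.
    by rewrite rmorphM addKn lead_coefE.
  move=> [j hj] /= ne; rewrite -(inj_eq val_inj) /= in ne.
  rewrite rmorphM; case: (ltngtP j r) ne => // [jr|rj] _.
    rewrite [b`__]nth_default ?rmorph0 ?mulr0 //.
    rewrite /t; case: (size b) => [|s] //=.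
    lia.
  have : ~~ (phi a`_j != 0) by apply: contraL rj => /rmax; rewrite leqNgt.
  by rewrite negbK => /eqP ->; rewrite mul0r.
have : r + t == 0%N.
  apply: contraLR (mulf_neq0 ar hb); rewrite -lt0n -key => /hi ->.
  by rewrite eqxx.
rewrite addn_eq0 => /andP[_ /eqP]; rewrite /t.
by case: (size b) => [|[|s]].
Qed.

Lemma lead_coef_at (R : nzRingType) (p : {poly R}) k : p`_k != 0 ->
  (forall j, (k < j)%N -> p`_j = 0) -> lead_coef p = p`_k.
Proof.
move=> pk hj; rewrite lead_coefE; have -> : size p = k.+1.
  apply/eqP; rewrite eqn_leq; apply/andP; split; first by apply/leq_sizeP.
  by rewrite ltnNge; apply: contra pk => /leq_sizeP ->.
by [].
Qed.

Lemma muni_gpoly_coef (R : comRingType) n q i : ~~ odd n -> q != 0%N ->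
  (muni (gpoly R n.+1 q))`_i =
   (if i == 0%N then gpoly R n q else 0) +
   ('X_(ord_max) ^+ q * (i == 1%N)%:R - 'X_(ord_max) * (i == q)%:R).
Proof.
move=> evn q0; rewrite muni_gpoly // coefD coefC coefB !coefCM coefX coefXn.
by [].
Qed.

Lemma msize_gt1 (R : idomainType) n q (G : {mpoly R[n]}) :
  G != 0 -> G \is q.+1.-homog -> (1 < msize G)%N.
Proof.
move=> G0 hG; case E: (msupp G) => [|m s].
  by move/eqP: E; rewrite msupp_eq0 (negbTE G0).
have mG : m \in msupp G by rewrite E mem_head.
have := msize_mdeg_lt mG; rewrite (dhomog_mf hG mG).
by apply: leq_trans.
Qed.

Lemma gpoly_eval_pt (L : idomainType) n q (t : L) : (2 <= n)%N -> ~~ odd n ->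
  (0 < q)%N ->
  (gpoly L n q).@[fun i : 'I_n.+1 => if val i == 0%N then t
                                     else if val i == 1%N then 1 else 0]
  = t ^+ q - t.
Proof.
move=> n2 evn q0; rewrite gpoly_eval.
have n0 : (0 < n)%N by apply: leq_trans n2.
rewrite (@sum_collapse _ _ _ (Ordinal n0)) //=.
  rewrite !inordK ?(leq_trans _ n2) //= expr1n !mulr1.
  by [].
move=> i oi ne; rewrite -(inj_eq val_inj) /= in ne.
have i2 : (2 <= i)%N.
  by move: oi ne; case: (nat_of_ord i) => [|[|k]].
rewrite !inordK ?ltnS ?(ltnW (ltn_ord i)) ?ltn_ord //.
have -> : (nat_of_ord i == 0%N) = false by case: (nat_of_ord i) i2 => [|[|k]].
have -> : (nat_of_ord i == 1%N) = false by case: (nat_of_ord i) i2 => [|[|k]].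
have -> : ((nat_of_ord i).+1 == 0%N) = false by [].
have -> : ((nat_of_ord i).+1 == 1%N) = false by case: (nat_of_ord i) i2 => [|[|k]].
by rewrite mulr0 mul0r subrr.
Qed.

Lemma nat3 x y : x != 0%N -> y != 0%N -> 2 = (x + y).-1 -> (x == 1%N) || (y == 1%N).
Proof. move=> hx hy e; apply/orP; lia. Qed.

Lemma muni_const (R : comRingType) n (b : {mpoly R[n.+1]}) c :
  (size (muni b) <= 1)%N -> lead_coef (muni b) = c%:MP -> b = c%:MP.
Proof.
move=> s1 lc; rewrite -(rho_muni b) (size1_polyC s1).
have -> : (muni b)`_0 = lead_coef (muni b).
  by rewrite lead_coefE; case: (size (muni b)) s1 => [|[|]].
by rewrite lc /rho map_polyC hornerC /=; apply: mwidenC.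
Qed.

Lemma gpoly_irr (L : idomainType) n q (t : L) : ~~ odd n -> (2 <= n)%N ->
  (2 <= q)%N -> t ^+ q != t -> mirreducible (gpoly L n.+1 q).
Proof.
move=> evn n2 q2 tq.
have q1 : q != 1%N by move: q2; case: (q) => [|[|]].
have q0 : q != 0%N by move: q2; case: (q) => [|[|]].
have G0 := gpoly_neq0 L evn q1.
split; first exact: (msize_gt1 G0 (gpoly_homog _ _ _)).
move=> a b Gab.
pose e := fun i : 'I_n.+1 => if val i == 0%N then t else if val i == 1%N then 1 else 0.
pose phi := (meval e : {rmorphism {mpoly L[n.+1]} -> L}).
have PE : muni (gpoly L n.+1 q) = muni a * muni b by rewrite Gab rmorphM.
have eX : phi 'X_(ord_max) = 0.
  rewrite /phi /= mevalXU /e /=.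
  by move: n2; case: (n) => [|[|k]].
have h0 : phi ((muni a * muni b)`_0) != 0.
  rewrite -PE muni_gpoly_coef // eqxx /= [(0%N == q)]eq_sym (negbTE q0) !mulr0 subr0 addr0.
  by rewrite /e gpoly_eval_pt // ?lt0n // subr_eq0.
have hi : forall i, (0 < i)%N -> phi ((muni a * muni b)`_i) = 0.
  move=> i i0; rewrite -PE muni_gpoly_coef //.
  have -> : (i == 0%N) = false by case: (i) i0.
  rewrite add0r.
  rewrite rmorphB !rmorphM rmorphXn eX expr0n (negbTE q0).
  by rewrite !mul0r subrr.
have hl : lead_coef (muni a) * lead_coef (muni b) = - 'X_(ord_max).
  rewrite -lead_coefM -PE (@lead_coef_at _ _ q).
    rewrite muni_gpoly_coef // (negbTE q0) (negbTE q1) eqxx add0r mulr0 sub0r.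
    by rewrite mulr1.
    rewrite muni_gpoly_coef // (negbTE q0) (negbTE q1) eqxx add0r mulr0 sub0r.
    by rewrite mulr1 oppr_eq0 mpolyX_neq0.
  move=> j qj; rewrite muni_gpoly_coef //.
  have -> : (j == 0%N) = false by case: (j) qj.
  have -> : (j == 1%N) = false by rewrite gtn_eqF // (ltn_trans q2 qj).
  by rewrite (gtn_eqF qj) add0r !mulr0 subrr.
have XN : - ('X_(ord_max) : {mpoly L[n.+1]}) != 0.
  by rewrite oppr_eq0; exact: mpolyX_neq0.
move: (XN); rewrite -hl mulf_eq0 negb_or => /andP[la0 lb0].
have E := msizeM la0 lb0.
rewrite hl mmeasureN msizeX mdeg1 in E.
have sa : msize (lead_coef (muni a)) != 0%N.
  rewrite msize_poly_eq0; exact: la0.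
have sb : msize (lead_coef (muni b)) != 0%N.
  rewrite msize_poly_eq0; exact: lb0.
have hor := nat3 sa sb E.
case/orP: hor => [Ea|Eb].
  case/msize_poly1P: Ea => c c0 laE.
  rewrite mulrC in h0 hi.
  have s1 : (size (muni a) <= 1)%N.
    apply: (eis h0 hi); rewrite laE; have -> : phi c%:MP = c := mevalC e c; exact: c0.
  left; rewrite (muni_const s1 laE) mmeasureC.
  by case: (c != 0).
case/msize_poly1P: Eb => c c0 lbE.
have s1 : (size (muni b) <= 1)%N.
  apply: (eis h0 hi); rewrite lbE; have -> : phi c%:MP = c := mevalC e c; exact: c0.
right; rewrite (muni_const s1 lbE) mmeasureC.
by case: (c != 0).
Qed.

Lemma exists_t (L : closedFieldType) q : (1 < q)%N -> exists t : L, t ^+ q != t.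
Proof.
case: q => [|[|q]] // _.
have [t ht] := @solve_monicpoly L q.+2 (fun i => ((i <= 1)%N)%:R) isT.
exists t; rewrite ht !big_ord_recl big1 => [|i _] /=.
  by rewrite !mul1r expr0 expr1 addr0 -subr_eq0 addrK oner_neq0.
by rewrite mul0r.
Qed.

Unset Implicit Arguments.
Theorem mainTheorem6 (F : finFieldType) (n : nat) :
  odd n ->
  let q := #|F| in
  let g := gpoly F n q in
  (* V(g) is a hypersurface of degree q+1 *)
  (g != 0 /\ g \is (q.+1).-homog) /\
  (* smooth: geometrically, i.e. over every algebraically closed extension *)
  (forall (L : closedFieldType) (f : {rmorphism F -> L}),
      smooth_hypersurface (map_mpoly f g)) /\
  (* V(g)(F_q) = P^n(F_q): every F_q-rational point lies on V(g) *)
  (forall x : 'I_n.+1 -> F, nonzero_vec x -> g.@[x] = 0) /\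
  (* geometrically irreducible when n >= 3 *)
  ((3 <= n)%N ->
    forall (L : closedFieldType) (f : {rmorphism F -> L}),
      irreducible_hypersurface (map_mpoly f g)).
Proof.
case: n => [|n] on; first by [].
move=> q g.
have ev : ~~ odd n by [].
have q2 : (1 < q)%N := finNzRing_gt1 F.
have q1 : q != 1%N by move: q2; case: (q) => [|[|]].
split; first by split; [exact: gpoly_neq0 | exact: gpoly_homog].
split.
  move=> L f; rewrite /g gpoly_map; apply: gpoly_smooth => //.
  by rewrite -(rmorph_nat f) card_char rmorph0.
split; first by move=> x _; exact: gpoly_Fpts.
move=> n3 L f; have [t ht] := exists_t L q2.
exists 1, (map_mpoly f g), 1%N; split; first exact: oner_neq0.
split; last by rewrite expr1 scale1r.
by rewrite /g gpoly_map; apply: (gpoly_irr (t := t)).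
Qed.
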